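(* Let $A$ be a finite undirected multigraph (an object of $\mathbf{uGraph}$) possessing an edge $e$ such that removing $e$ from $A$ yields a disjoint union $A_1+A_2$ of two subgraphs (i.e. $e$ is a bridge), and let $A_1+A_2\hookrightarrow A$ be the inclusion. Let $\beta_j:A_j\hookrightarrow B_j$ ($j=1,2$) be $\mathcal M$-morphisms, and let $B$ be the pushout of $A\hookleftarrow A_1+A_2\xrightarrow{[\beta_1,\beta_2]}B_1+B_2$, with induced $B_1+B_2\hookrightarrow B$. Then $$\mathsf{Shift}\big(A_1+A_2\xrightarrow{[\beta_1,\beta_2]}B_1+B_2,\ \neg\exists(A_1+A_2\hookrightarrow A)\big)=\neg\exists(B_1+B_2\hookrightarrow B).$$
   Context: $\mathbf{uGraph}$: objects are triples $(E,V,i)$ of finite sets and a map $i:E\to\mathcal P^{(1,2)}(V)$ into the subsets of $V$ of size 1 or 2; morphisms are pairs of maps compatible with incidence; $\mathcal M$ is the class of component-wise injective morphisms. Conditions over an object $X$: $\mathsf{true}$, $\exists(f:X\hookrightarrow Y,c_Y)$ with $f\in\mathcal M$ and $c_Y$ a condition over $Y$ (write $\exists(f)$ for $\exists(f,\mathsf{true})$), $\neg c_X$, $c^{(1)}_X\wedge c^{(2)}_X$. The operation $\mathsf{Shift}$ (extending a condition over $X$ along $y:X\hookrightarrow Y$ in $\mathcal M$ to a condition over $Y$, such that $g\circ y\models c_X$ iff $g\models\mathsf{Shift}(y,c_X)$ for all $g\in\mathcal M$ out of $Y$) is computed recursively by: $\mathsf{Shift}(y,\mathsf{true})=\mathsf{true}$;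 $\mathsf{Shift}(y,\neg c)=\neg\mathsf{Shift}(y,c)$; $\mathsf{Shift}(y,c^{(1)}\wedge c^{(2)})=\mathsf{Shift}(y,c^{(1)})\wedge\mathsf{Shift}(y,c^{(2)})$; and $\mathsf{Shift}(y,\exists(a:X\hookrightarrow A,c_A))=\bigwedge\exists(\bar a,\mathsf{Shift}(\bar y,c_A))$, where the conjunction ranges over triples $(a':X'\hookrightarrow A,x':X\hookrightarrow X',y':X'\hookrightarrow Y)$ of $\mathcal M$-morphisms (up to isomorphism) with $a'\circ x'=a$ and $y'\circ x'=y$, where $A_{X'}$ is the pushout of $A\xleftarrow{a'}X'\xrightarrow{y'}Y$ with induced $\bar a:Y\hookrightarrow A_{X'}$ and $\bar y:A\hookrightarrow A_{X'}$. *)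

(* Defs.v *)
From mathcomp Require Import all_boot.
Set Implicit Arguments.
Unset Strict Implicit.
Unset Printing Implicit Defensive.

(* A finite undirected multigraph: finite edge and vertex sets and an
   incidence map into the subsets of V of size 1 or 2. *)
Record graph := Graph {
  gE : finType;
  gV : finType;
  ginc : gE -> {set gV};
  ginc_size : forall e, 0 < #|ginc e| <= 2 }.

Record mor (X Y : graph) := Mor {
  mE : gE X -> gE Y;
  mV : gV X -> gV Y;
  mor_inc : forall e, ginc (mE e) = mV @: ginc e }.

Record mmor (X Y : graph) := MMor {
  mmor_mor :> mor X Y;
  mmor_injE : injective (mE mmor_mor);
  mmor_injV : injective (mV mmor_mor) }.

Definition meq (X Y : graph) (f g : mor X Y) :=
  mE f =1 mE g /\ mV f =1 mV g.

Lemma mcomp_inc (X Y Z : graph) (g : mor Y Z) (f : mor X Y) (e : gE X) :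
  ginc (mE g (mE f e)) = (mV g \o mV f) @: ginc e.
Proof. by rewrite mor_inc mor_inc imset_comp. Qed.

Definition mcomp (X Y Z : graph) (g : mor Y Z) (f : mor X Y) : mor X Z :=
  @Mor X Z (mE g \o mE f) (mV g \o mV f) (mcomp_inc g f).

Definition is_iso (X Y : graph) (f : mor X Y) :=
  bijective (mE f) /\ bijective (mV f).

Definition is_pushout (X A Y P : graph) (f : mor X A) (g : mor X Y)
    (p : mor Y P) (q : mor A P) :=
  meq (mcomp q f) (mcomp p g) /\
  forall (Z : graph) (u : mor A Z) (v : mor Y Z),
    meq (mcomp u f) (mcomp v g) ->
    exists h : mor P Z,
      [/\ meq (mcomp h q) u, meq (mcomp h p) v &
          forall h' : mor P Z, meq (mcomp h' q) u -> meq (mcomp h' p) v ->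
            meq h' h].

Lemma gsum_size (G1 G2 : graph) (e : gE G1 + gE G2) :
  0 < #|match e with
        | inl e1 => inl @: ginc e1
        | inr e2 => inr @: ginc e2 end : {set gV G1 + gV G2}| <= 2.
Proof.
case: e => x.
  by rewrite card_imset; [exact: ginc_size | move=> a b []].
by rewrite card_imset; [exact: ginc_size | move=> a b []].
Qed.

Definition gsum (G1 G2 : graph) : graph :=
  @Graph (gE G1 + gE G2)%type (gV G1 + gV G2)%type
    (fun e => match e with
              | inl e1 => inl @: ginc e1
              | inr e2 => inr @: ginc e2 end) (@gsum_size G1 G2).

Definition sumf (T1 T2 U1 U2 : Type) (f1 : T1 -> U1) (f2 : T2 -> U2)
  (x : T1 + T2) : U1 + U2 :=
  match x with inl a => inl (f1 a) | inr b => inr (f2 b) end.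

Lemma msum_inc (A1 A2 B1 B2 : graph) (b1 : mor A1 B1) (b2 : mor A2 B2)
  (e : gE (gsum A1 A2)) :
  ginc (sumf (mE b1) (mE b2) e : gE (gsum B1 B2)) =
  sumf (mV b1) (mV b2) @: ginc e.
Proof.
case: e => x /=; rewrite mor_inc -!imset_comp; exact: eq_imset.
Qed.

Definition msum_mor (A1 A2 B1 B2 : graph) (b1 : mor A1 B1) (b2 : mor A2 B2) :
  mor (gsum A1 A2) (gsum B1 B2) :=
  @Mor (gsum A1 A2) (gsum B1 B2) _ _ (msum_inc b1 b2).

Lemma sumf_inj (T1 T2 U1 U2 : Type) (f1 : T1 -> U1) (f2 : T2 -> U2) :
  injective f1 -> injective f2 -> injective (sumf f1 f2).
Proof.
move=> i1 i2 [a|a] [b|b] //= [] h; congr (_ _); [exact: i1 | exact: i2].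
Qed.

Definition msum (A1 A2 B1 B2 : graph) (b1 : mmor A1 B1) (b2 : mmor A2 B2) :
  mmor (gsum A1 A2) (gsum B1 B2) :=
  @MMor _ _ (msum_mor b1 b2)
    (sumf_inj (@mmor_injE _ _ b1) (@mmor_injE _ _ b2))
    (sumf_inj (@mmor_injV _ _ b1) (@mmor_injV _ _ b2)).

Inductive cond : graph -> Type :=
| ctrue (X : graph) : cond X
| cex (X Y : graph) (f : mmor X Y) (c : cond Y) : cond X
| cneg (X : graph) (c : cond X) : cond X
| cand (X : graph) (c1 c2 : cond X) : cond X.

Fixpoint bigand_seq (X : graph) (s : seq (cond X)) : cond X :=
  match s with
  | [::] => ctrue X
  | [:: c] => c
  | c :: s' => cand c (bigand_seq s')
  end.

Definition bigand (X : graph) (n : nat) (F : 'I_n -> cond X) : cond X :=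
  bigand_seq [seq F i | i <- enum 'I_n].

Record triple (X A Y : graph) (a : mmor X A) (y : mmor X Y) := Triple {
  tX : graph;
  ta : mmor tX A;
  tx : mmor X tX;
  ty : mmor tX Y;
  ta_eq : meq (mcomp ta tx) a;
  ty_eq : meq (mcomp ty tx) y }.

Definition triple_iso (X A Y : graph) (a : mmor X A) (y : mmor X Y)
    (t1 t2 : triple a y) :=
  exists phi : mor (tX t1) (tX t2),
    [/\ is_iso phi, meq (mcomp (ta t2) phi) (ta t1),
        meq (mcomp phi (tx t1)) (tx t2) & meq (mcomp (ty t2) phi) (ty t1)].

(* [ShiftRel y c d] : d is a (valid result of) Shift(y, c), computed by the
   recursive clauses; in the existential clause the conjunction ranges over a
   family of triples containing exactly one representative of each
   isomorphism class of triples, with a chosen pushout for each. *)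
Inductive ShiftRel : forall (X Y : graph), mmor X Y -> cond X -> cond Y -> Prop :=
| sh_true (X Y : graph) (y : mmor X Y) : ShiftRel y (ctrue X) (ctrue Y)
| sh_neg (X Y : graph) (y : mmor X Y) c d :
    ShiftRel y c d -> ShiftRel y (cneg c) (cneg d)
| sh_and (X Y : graph) (y : mmor X Y) c1 c2 d1 d2 :
    ShiftRel y c1 d1 -> ShiftRel y c2 d2 ->
    ShiftRel y (cand c1 c2) (cand d1 d2)
| sh_ex (X Y A : graph) (y : mmor X Y) (a : mmor X A) (cA : cond A)
    (n : nat) (T : 'I_n -> triple a y) (P : 'I_n -> graph)
    (abar : forall i, mmor Y (P i)) (ybar : forall i, mmor A (P i))
    (d : forall i, cond (P i)) :
    (forall i, is_pushout (ta (T i)) (ty (T i)) (abar i) (ybar i)) ->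
    (forall t : triple a y, exists i, triple_iso t (T i)) ->
    (forall i j, triple_iso (T i) (T j) -> i = j) ->
    (forall i, ShiftRel (ybar i) cA (d i)) ->
    ShiftRel y (cex a cA) (bigand (fun i => cex (abar i) (d i))).

(* Main.v *)
Require Import Defs.
From mathcomp Require Import all_boot.
Set Implicit Arguments.
Unset Strict Implicit.
Unset Printing Implicit Defensive.

Lemma imset_pair (T U : finType) (f : T -> U) (a b : T) :
  f @: [set a; b] = [set f a; f b].
Proof. by rewrite imsetU1 imset_set1. Qed.

Lemma inj_surj_bij (T T' : finType) (f : T -> T') :
  injective f -> (forall w, exists v, f v = w) -> bijective f.
Proof.
move=> fi fs.
have H : forall w, w \in codom f.
  by move=> w; case: (fs w) => v <-; exact: codom_f.
exists (fun w => iinv (H w)) => x; last exact: f_iinv.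
by apply: fi; rewrite f_iinv.
Qed.

Definition idmor (X : graph) : mor X X :=
  @Mor X X id id (fun e => esym (imset_id (ginc e))).

Definition idmmor (X : graph) : mmor X X :=
  @MMor X X (idmor X) (fun a b (h : a = b) => h) (fun a b (h : a = b) => h).

Lemma meq_trans (X Y : graph) (f g h : mor X Y) : meq f g -> meq g h -> meq f h.
Proof. by case=> [h1 h2] [h3 h4]; split=> x; [rewrite h1 h3 | rewrite h2 h4]. Qed.

Lemma meq_sym (X Y : graph) (f g : mor X Y) : meq f g -> meq g f.
Proof. by case=> [h1 h2]; split=> x; [rewrite h1 | rewrite h2]. Qed.

Lemma po_iso (X X' A Y P B : graph) (f : mor X A) (g : mor X Y)
  (x : mor X X') (f' : mor X' A) (g' : mor X' Y)
  (abar : mor Y P) (ybar : mor A P) (p : mor Y B) (q : mor A B) :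
  bijective (mE x) -> bijective (mV x) ->
  meq (mcomp f' x) f -> meq (mcomp g' x) g ->
  is_pushout f' g' abar ybar -> is_pushout f g p q ->
  exists phi : mor P B, is_iso phi /\ meq (mcomp phi abar) p.
Proof.
case=> xiE xE1 xE2 [xiV xV1 xV2] [fE fV] [gE gV] [[c1E c1V] UP] [[c2E c2V] UB].
have [|h [hq hp hu]] := UP B q p.
  split=> w /=.
    rewrite -(xE2 w); move: (fE (xiE w)) (gE (xiE w)) => /= -> ->; exact: c2E.
  rewrite -(xV2 w); move: (fV (xiV w)) (gV (xiV w)) => /= -> ->; exact: c2V.
have [|k [kq kp ku]] := UB P ybar abar.
  split=> w /=.
    move: (fE w) (gE w) => /= <- <-; exact: c1E.
  move: (fV w) (gV w) => /= <- <-; exact: c1V.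
have [|h0 [h0q h0p h0u]] := UB B q p.
  by split=> w /=; [exact: c2E | exact: c2V].
have [|k0 [k0q k0p k0u]] := UP P ybar abar.
  by split=> w /=; [exact: c1E | exact: c1V].
have hk : meq (mcomp h k) (idmor B).
  apply: (@meq_trans _ _ _ h0); first apply: h0u.
  - case: hq kq => [a1 a2] [b1 b2]; split=> w /=.
      by move: (b1 w) => /= ->; exact: a1.
    by move: (b2 w) => /= ->; exact: a2.
  - case: hp kp => [a1 a2] [b1 b2]; split=> w /=.
      by move: (b1 w) => /= ->; exact: a1.
    by move: (b2 w) => /= ->; exact: a2.
  apply: meq_sym; apply: h0u; by split.
have kh : meq (mcomp k h) (idmor P).
  apply: (@meq_trans _ _ _ k0); first apply: k0u.
  - case: hq kq => [a1 a2] [b1 b2]; split=> w /=.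
      by move: (a1 w) => /= ->; exact: b1.
    by move: (a2 w) => /= ->; exact: b2.
  - case: hp kp => [a1 a2] [b1 b2]; split=> w /=.
      by move: (a1 w) => /= ->; exact: b1.
    by move: (a2 w) => /= ->; exact: b2.
  apply: meq_sym; apply: k0u; by split.
exists h; split=> //; case: hk kh => [a1 a2] [b1 b2]; split.
  by exists (mE k).
by exists (mV k).
Qed.

Definition negQ (X Y : graph) (y : mmor X Y) (c : cond X) (d : cond Y) : Prop :=
  match c in cond X0 return mmor X0 Y -> Prop with
  | cneg X0 c' => fun y0 => exists d', d = cneg d' /\ ShiftRel y0 c' d'
  | _ => fun _ => True end y.

Lemma negQ_ok (X Y : graph) (y : mmor X Y) c d : ShiftRel y c d -> negQ y c d.
Proof. by case=> //= *; eexists; split; [reflexivity | eassumption]. Qed.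

Definition trueQ (X Y : graph) (y : mmor X Y) (c : cond X) (d : cond Y) : Prop :=
  match c with ctrue _ => d = ctrue Y | _ => True end.

Lemma trueQ_ok (X Y : graph) (y : mmor X Y) c d : ShiftRel y c d -> trueQ y c d.
Proof. by case. Qed.

Definition exQ (X Y : graph) (y : mmor X Y) (c : cond X) (d : cond Y) : Prop :=
  match c in cond X0 return mmor X0 Y -> Prop with
  | cex X0 A0 a cA => fun y0 =>
    exists (n : nat) (T : 'I_n -> triple a y0) (P : 'I_n -> graph)
    (abar : forall i, mmor Y (P i)) (ybar : forall i, mmor A0 (P i))
    (d' : forall i, cond (P i)),
    [/\ (forall i, is_pushout (ta (T i)) (ty (T i)) (abar i) (ybar i)),
    (forall t : triple a y0, exists i, triple_iso t (T i)),
    (forall i j, triple_iso (T i) (T j) -> i = j),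
    (forall i, ShiftRel (ybar i) cA (d' i)) &
    d = bigand (fun i => cex (abar i) (d' i))]
  | _ => fun _ => True end y.

Lemma exQ_ok (X Y : graph) (y : mmor X Y) c d : ShiftRel y c d -> exQ y c d.
Proof.
case=> //= X0 Y0 A0 y0 a cA n T P abar ybar d' H1 H2 H3 H4.
by exists n, T, P, abar, ybar, d'.
Qed.

Lemma triple_bij (A1 A2 A B1 B2 : graph) (iota : mmor (gsum A1 A2) A) (e : gE A)
  (Hvert : bijective (mV iota))
  (Hedge : forall e' : gE A, e' != e <-> exists e0, mE iota e0 = e')
  (v1 : gV A1) (v2 : gV A2)
  (Hbridge : ginc e = [set mV iota (inl v1); mV iota (inr v2)])
  (beta1 : mmor A1 B1) (beta2 : mmor A2 B2)
  (t : triple iota (msum beta1 beta2)) :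
  bijective (mE (tx t)) /\ bijective (mV (tx t)).
Proof.
case: t => X' a' x' y' [aE aV] [yE yV] /=.
have aiE := @mmor_injE _ _ a'; have aiV := @mmor_injV _ _ a'.
case: Hvert => g gK Kg.
split; apply: inj_surj_bij; first exact: (@mmor_injE _ _ x').
- move=> w; case: (eqVneq (mE a' w) e) => [he|hne].
    exfalso.
    have hinc := mor_inc a' w; rewrite he Hbridge in hinc.
    have mem1 : mV x' (inl v1) \in ginc w.
      have : mV iota (inl v1) \in [set mV a' u | u in ginc w].
        by rewrite -hinc !inE eqxx.
      case/imsetP=> u0 uin; rewrite -(aV (inl v1)) /= => /aiV ->; exact: uin.
    have mem2 : mV x' (inr v2) \in ginc w.
      have : mV iota (inr v2) \in [set mV a' u | u in ginc w].
        by rewrite -hinc !inE eqxx orbT.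
      case/imsetP=> u0 uin; rewrite -(aV (inr v2)) /= => /aiV ->; exact: uin.
    have m1 : inl (mV beta1 v1) \in ginc (mE y' w).
      by rewrite mor_inc; move: (yV (inl v1)) => /= <-; exact: imset_f.
    have m2 : inr (mV beta2 v2) \in ginc (mE y' w).
      by rewrite mor_inc; move: (yV (inr v2)) => /= <-; exact: imset_f.
    move: m1 m2; case: (mE y' w) => f /= /imsetP [u _ hu] /imsetP [u' _ hu'] //.
  case/Hedge: hne => e0 he0; exists e0; apply: aiE.
  by rewrite -he0 -(aE e0).
- exact: (@mmor_injV _ _ x').
- move=> w; exists (g (mV a' w)); apply: aiV.
  by move: (aV (g (mV a' w))) => /= ->; rewrite Kg.
Qed.

Lemma triples_iso (X A Y : graph) (a : mmor X A) (y : mmor X Y)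
  (t1 t2 : triple a y) :
  bijective (mE (tx t1)) -> bijective (mV (tx t1)) ->
  bijective (mE (tx t2)) -> bijective (mV (tx t2)) ->
  triple_iso t1 t2.
Proof.
case: t1 t2 => X1 a1 x1 y1 [a1E a1V] [y1E y1V] [X2 a2 x2 y2 [a2E a2V] [y2E y2V]] /=.
case=> gE gE1 gE2 [gV gV1 gV2] bE2 bV2.
have inc w : ginc (mE x2 (gE w)) = (mV x2 \o gV) @: ginc w.
  rewrite mor_inc -{2}(gE2 w) mor_inc -imset_comp; apply: eq_imset => u /=.
  by rewrite gV1.
exists (Mor inc); split.
- by split; apply: bij_comp => //; [exists (mE x1) | exists (mV x1)].
- split=> w /=.
    by move: (a2E (gE w)) => /= ->; rewrite -{2}(gE2 w); move: (a1E (gE w)) => /= ->.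
  by move: (a2V (gV w)) => /= ->; rewrite -{2}(gV2 w); move: (a1V (gV w)) => /= ->.
- by split=> w /=; rewrite ?gE1 ?gV1.
- split=> w /=.
    by move: (y2E (gE w)) => /= ->; rewrite -{2}(gE2 w); move: (y1E (gE w)) => /= ->.
  by move: (y2V (gV w)) => /= ->; rewrite -{2}(gV2 w); move: (y1V (gV w)) => /= ->.
Qed.

Lemma canon_taE (X A Y : graph) (a : mmor X A) :
  meq (mcomp a (idmmor X)) a.
Proof. by split. Qed.

Definition canon (X A Y : graph) (a : mmor X A) (y : mmor X Y) : triple a y :=
  @Triple X A Y a y X a (idmmor X) y (canon_taE Y a) (canon_taE A y).

Definition Pinc (B1 B2 : graph) (b1 : gV B1) (b2 : gV B2)
  (x : option (gE (gsum B1 B2))) : {set gV (gsum B1 B2)} :=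
  match x with Some f => ginc f | None => [set inl b1; inr b2] end.

Lemma Pinc_size (B1 B2 : graph) (b1 : gV B1) (b2 : gV B2) x :
  0 < #|Pinc b1 b2 x| <= 2.
Proof. by case: x => [f|] /=; [exact: (ginc_size f) | rewrite cards2]. Qed.

Definition Pg (B1 B2 : graph) (b1 : gV B1) (b2 : gV B2) : graph :=
  @Graph (option (gE (gsum B1 B2))) (gV (gsum B1 B2)) _ (@Pinc_size B1 B2 b1 b2).

Lemma abar_inc (B1 B2 : graph) (b1 : gV B1) (b2 : gV B2) (f : gE (gsum B1 B2)) :
  ginc (Some f : gE (Pg b1 b2)) = id @: ginc f.
Proof. by rewrite imset_id. Qed.

Definition abarC (B1 B2 : graph) (b1 : gV B1) (b2 : gV B2) :
  mmor (gsum B1 B2) (Pg b1 b2) :=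
  @MMor _ _ (@Mor (gsum B1 B2) (Pg b1 b2) (@Some _) id (@abar_inc _ _ b1 b2))
   (fun a b (h : Some a = Some b) => Some_inj h) (fun a b (h : a = b) => h).

Definition ybarE (A1 A2 A B1 B2 : graph) (iota : mmor (gsum A1 A2) A)
  (beta1 : mmor A1 B1) (beta2 : mmor A2 B2) (e' : gE A) :
  option (gE (gsum B1 B2)) :=
  match [pick e0 | mE iota e0 == e'] with
  | Some e0 => Some (mE (msum beta1 beta2) e0) | None => None end.

Lemma ybar_inc (A1 A2 A B1 B2 : graph) (iota : mmor (gsum A1 A2) A) (e : gE A)
  (Hedge : forall e' : gE A, e' != e <-> exists e0, mE iota e0 = e')
  (v1 : gV A1) (v2 : gV A2)
  (Hbridge : ginc e = [set mV iota (inl v1); mV iota (inr v2)])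
  (beta1 : mmor A1 B1) (beta2 : mmor A2 B2) (g : gV A -> gV (gsum A1 A2))
  (gK : cancel (mV iota) g) (e' : gE A) :
  ginc (ybarE iota beta1 beta2 e' : gE (Pg (mV beta1 v1) (mV beta2 v2))) =
  (mV (msum beta1 beta2) \o g) @: ginc e'.
Proof.
rewrite /ybarE; case: pickP => [e0 /eqP <-|none].
  change (ginc (mE (msum beta1 beta2) e0) = (mV (msum beta1 beta2) \o g) @: ginc (mE iota e0)).
  rewrite (mor_inc (msum beta1 beta2)) (mor_inc iota) -imset_comp; apply: eq_imset => u /=; by rewrite gK.
have -> : e' = e.
  apply/eqP; apply/negPn/negP => /Hedge [e0 he0].
  by move: (none e0); rewrite he0 eqxx.
by rewrite Hbridge imset_pair /= !gK.
Qed.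

Definition ybarC (A1 A2 A B1 B2 : graph) (iota : mmor (gsum A1 A2) A) (e : gE A)
  (Hedge : forall e' : gE A, e' != e <-> exists e0, mE iota e0 = e')
  (v1 : gV A1) (v2 : gV A2)
  (Hbridge : ginc e = [set mV iota (inl v1); mV iota (inr v2)])
  (beta1 : mmor A1 B1) (beta2 : mmor A2 B2) (g : gV A -> gV (gsum A1 A2))
  (gK : cancel (mV iota) g) : mor A (Pg (mV beta1 v1) (mV beta2 v2)) :=
  @Mor A (Pg (mV beta1 v1) (mV beta2 v2)) (ybarE iota beta1 beta2) _
    (ybar_inc Hedge Hbridge beta1 beta2 gK).

Lemma ybarE_none (A1 A2 A B1 B2 : graph) (iota : mmor (gsum A1 A2) A) (e : gE A)
  (Hedge : forall e' : gE A, e' != e <-> exists e0, mE iota e0 = e')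
  (beta1 : mmor A1 B1) (beta2 : mmor A2 B2) (e' : gE A) :
  (ybarE iota beta1 beta2 e' == None) = (e' == e).
Proof.
rewrite /ybarE; case: pickP => [e0 /eqP he|none] /=.
  by apply/esym/negbTE; apply/Hedge; exists e0.
apply/esym/eqP; apply/eqP; apply/negPn/negP => /Hedge [e0 he0].
by move: (none e0); rewrite he0 eqxx.
Qed.

Lemma ybarE_some (A1 A2 A B1 B2 : graph) (iota : mmor (gsum A1 A2) A)
  (beta1 : mmor A1 B1) (beta2 : mmor A2 B2) (e0 : gE (gsum A1 A2)) :
  ybarE iota beta1 beta2 (mE iota e0) = Some (mE (msum beta1 beta2) e0).
Proof.
rewrite /ybarE; case: pickP => [e1 /eqP he|none].
  by move/(@mmor_injE _ _ iota): he => ->.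
by move: (none e0); rewrite eqxx.
Qed.

Lemma ybarE_inj (A1 A2 A B1 B2 : graph) (iota : mmor (gsum A1 A2) A) (e : gE A)
  (Hedge : forall e' : gE A, e' != e <-> exists e0, mE iota e0 = e')
  (beta1 : mmor A1 B1) (beta2 : mmor A2 B2) :
  injective (ybarE iota beta1 beta2).
Proof.
move=> x1 x2.
have hn : ybarE iota beta1 beta2 e = None by apply/eqP; rewrite (ybarE_none Hedge) eqxx.
case: (eqVneq x1 e) => [->|n1].
  rewrite hn => /esym /eqP; rewrite (ybarE_none Hedge) => /eqP //.
case/Hedge: n1 => e1 <-; rewrite ybarE_some.
case: (eqVneq x2 e) => [->|n2].
  by rewrite hn.
case/Hedge: n2 => e2 <-; rewrite ybarE_some => -[] /(@mmor_injE _ _ (msum beta1 beta2)) ->.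
done.
Qed.

Lemma concrete_po (A1 A2 A B1 B2 : graph) (iota : mmor (gsum A1 A2) A) (e : gE A)
  (Hedge : forall e' : gE A, e' != e <-> exists e0, mE iota e0 = e')
  (v1 : gV A1) (v2 : gV A2)
  (Hbridge : ginc e = [set mV iota (inl v1); mV iota (inr v2)])
  (beta1 : mmor A1 B1) (beta2 : mmor A2 B2) (g : gV A -> gV (gsum A1 A2))
  (gK : cancel (mV iota) g) (Kg : cancel g (mV iota)) :
  is_pushout iota (msum beta1 beta2) (abarC (mV beta1 v1) (mV beta2 v2))
    (ybarC Hedge Hbridge beta1 beta2 gK).
Proof.
have hn : ybarE iota beta1 beta2 e = None by apply/eqP; rewrite (ybarE_none Hedge) eqxx.
split.
  split=> w /=; last by rewrite gK.
  exact: ybarE_some.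
move=> Z u v [uvE uvV].
pose hE (x : option (gE (gsum B1 B2))) :=
  match x with Some f => mE v f | None => mE u e end.
have hinc : forall x : gE (Pg (mV beta1 v1) (mV beta2 v2)),
    ginc (hE x) = mV v @: ginc x.
  case=> [f|] /=; first exact: mor_inc.
  rewrite mor_inc Hbridge !imset_pair.
  by move: (uvV (inl v1)) (uvV (inr v2)) => /= -> ->.
exists (Mor hinc); split.
- split=> w /=.
    case: (eqVneq w e) => [->|]; first by rewrite hn.
    case/Hedge => e0 <-; rewrite ybarE_some /=.
    by move: (uvE e0) => /= ->.
  by move: (uvV (g w)) => /= <-; rewrite Kg.
- by split.
- move=> h' [h1E h1V] [h2E h2V]; split=> w /=; last exact: h2V.
  case: w => [f|]; first exact: h2E.
  rewrite -hn; move: (h1E e) => /= ->.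
  by rewrite hn.
Qed.
Unset Implicit Arguments.

Theorem mainTheorem6
  (A1 A2 A B1 B2 B : graph)
  (iota : mmor (gsum A1 A2) A) (e : gE A)
  (Hvert : bijective (mV iota))
  (Hedge : forall e' : gE A, e' != e <-> exists e0, mE iota e0 = e')
  (v1 : gV A1) (v2 : gV A2)
  (Hbridge : ginc e = [set mV iota (inl v1); mV iota (inr v2)])
  (beta1 : mmor A1 B1) (beta2 : mmor A2 B2)
  (p : mmor (gsum B1 B2) B) (q : mor A B)
  (Hpo : is_pushout iota (msum beta1 beta2) p q) :
  (exists d, ShiftRel (msum beta1 beta2) (cneg (cex iota (ctrue A))) d) /\
  (forall d, ShiftRel (msum beta1 beta2) (cneg (cex iota (ctrue A))) d ->
     exists (P : graph) (abar : mmor (gsum B1 B2) P) (phi : mor P B),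
       [/\ is_iso phi, meq (mcomp phi abar) p &
           d = cneg (cex abar (ctrue P))]).
Proof.
have tb := triple_bij Hvert Hedge Hbridge (beta1:=beta1) (beta2:=beta2).
have alliso : forall t1 t2 : triple iota (msum beta1 beta2), triple_iso t1 t2.
  move=> t1 t2; case: (tb t1) (tb t2) => [? ?] [? ?].
  exact: triples_iso.
split.
  case: Hvert => g gK Kg.
  pose yb := @MMor _ _ (ybarC Hedge Hbridge beta1 beta2 gK)
    (@ybarE_inj _ _ _ _ _ _ _ Hedge beta1 beta2)
    (inj_comp (@mmor_injV _ _ (msum beta1 beta2)) (can_inj Kg)).
  eexists; apply: sh_neg.
  apply: (@sh_ex _ _ _ _ _ _ 1 (fun _ => canon iota (msum beta1 beta2))
     (fun _ => Pg (mV beta1 v1) (mV beta2 v2))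
     (fun _ => abarC (mV beta1 v1) (mV beta2 v2)) (fun _ => yb)
     (fun _ => ctrue _)).
  - move=> i; exact: concrete_po.
  - by move=> t; exists ord0.
  - by move=> i j _; rewrite (ord1 i) (ord1 j).
  - move=> i; exact: sh_true.
move=> d /negQ_ok [d' [-> /exQ_ok [n [T [P [abar [ybar [d'' [H1 H2 H3 H4 ->]]]]]]]]].
have [i0 _] := H2 (canon iota (msum beta1 beta2)).
have n1 : n = 1.
  case: n T P abar ybar d'' H1 H2 H3 H4 i0 => [|[|n]] T P abar ybar d'' H1 H2 H3 H4 i0.
  - by case: i0.
  - done.
  - have := H3 (Ordinal (isT : 0 < n.+2)) (Ordinal (isT : 1 < n.+2)) (alliso _ _).
    by move/(congr1 val).
subst n.
rewrite /bigand enum_ordSl enum_ord0 /=.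
have -> : d'' ord0 = ctrue _ by exact: (trueQ_ok (H4 ord0)).
case: (tb (T ord0)) => bE bV.
have [phi [iphi hphi]] := po_iso bE bV (ta_eq (T ord0)) (ty_eq (T ord0)) (H1 ord0) Hpo.
by exists (P ord0), (abar ord0), phi.
Qed.
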